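(* Let $S\subseteq\mathbb{N}^d$ be a generalised numerical semigroup. A gap $h\in\mathcal{H}(S)$ is Frobenius allowable if and only if $h$ is a maximal element of $\mathcal{H}(S)$ with respect to the natural partial order on $\mathbb{N}^d$.
   Context: $\mathbb{N}=\{0,1,2,\dots\}$. A generalised numerical semigroup (GNS) is a submonoid $S\subseteq\mathbb{N}^d$ (i.e. $0\in S$ and $S$ is closed under addition) whose complement $\mathcal{H}(S)=\mathbb{N}^d\setminus S$ is finite; elements of $\mathcal{H}(S)$ are called gaps. The natural partial order on $\mathbb{N}^d$ is $x\le y$ iff $x^{(i)}\le y^{(i)}$ for all $i$. A relaxed monomial order is a total order $\prec$ on $\mathbb{N}^d$ such that (i) if $v\prec w$ then $v\prec w+u$ for every $u\in\mathbb{N}^d$, and (ii) $0\prec v$ for every nonzero $v\in\mathbb{N}^d$. For such an order, $F_\prec(S)=\max_\prec \mathcal{H}(S)$. A gap $h$ is Frobenius allowable if $h=F_\prec(S)$ for some relaxed monomial order $\prec$. *)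

(* Defs.v *)
From mathcomp Require Import all_boot.
From Stdlib Require Import List.

Set Implicit Arguments.
Unset Strict Implicit.
Unset Printing Implicit Defensive.

Definition pt (d : nat) := 'I_d -> nat.

Definition pt0 {d : nat} : pt d := fun _ => 0.
Definition ptadd {d : nat} (x y : pt d) : pt d := fun i => x i + y i.

Definition ptle {d : nat} (x y : pt d) : Prop := forall i, x i <= y i.

Definition is_gap {d : nat} (S : pt d -> Prop) (h : pt d) : Prop := ~ S h.

Definition is_GNS {d : nat} (S : pt d -> Prop) : Prop :=
  S pt0 /\
  (forall x y, S x -> S y -> S (ptadd x y)) /\
  (exists l : list (pt d), forall h, ~ S h -> In h l).

Definition is_relaxed_monomial_order {d : nat} (prec : pt d -> pt d -> Prop) : Prop :=
  (forall x, ~ prec x x) /\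
  (forall x y z, prec x y -> prec y z -> prec x z) /\
  (forall x y, prec x y \/ x = y \/ prec y x) /\
  (forall v w u, prec v w -> prec v (ptadd w u)) /\
  (forall v, v <> pt0 -> prec pt0 v).

Definition is_Frobenius_wrt {d : nat} (prec : pt d -> pt d -> Prop)
  (S : pt d -> Prop) (h : pt d) : Prop :=
  is_gap S h /\ forall g, is_gap S g -> g = h \/ prec g h.

Definition Frobenius_allowable {d : nat} (S : pt d -> Prop) (h : pt d) : Prop :=
  exists prec : pt d -> pt d -> Prop,
    is_relaxed_monomial_order prec /\ is_Frobenius_wrt prec S h.

Definition maximal_gap {d : nat} (S : pt d -> Prop) (h : pt d) : Prop :=
  is_gap S h /\ forall g, is_gap S g -> ptle h g -> g = h.

(* Main.v *)
Require Import Defs.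
From mathcomp Require Import all_boot.
From Stdlib Require Import Classical ClassicalDescription FunctionalExtensionality.

Set Implicit Arguments.
Unset Strict Implicit.
Unset Printing Implicit Defensive.

Fixpoint lt_lex (s t : seq nat) : bool :=
  match s, t with
  | [::], [::] => false
  | [::], _ => true
  | _, [::] => false
  | a :: s', b :: t' => (a < b) || ((a == b) && lt_lex s' t')
  end.

Lemma lex_irr s : ~~ lt_lex s s.
Proof. by elim: s => //= a s IH; rewrite ltnn eqxx /=. Qed.

Lemma lex_trans s t u : lt_lex s t -> lt_lex t u -> lt_lex s u.
Proof.
elim: s t u => [|a s IH] [|b t] [|c u] //=.
case/orP=> [ab|/andP[/eqP -> st]]; case/orP=> [bc|/andP[/eqP <- tu]].
- by rewrite (ltn_trans ab bc).
- by rewrite ab.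
- by rewrite bc.
- by rewrite eqxx (IH _ _ st tu) orbT.
Qed.

Lemma lex_total s t : lt_lex s t \/ s = t \/ lt_lex t s.
Proof.
elim: s t => [|a s IH] [|b t] //=; try by [right; left | left | right; right].
case: (ltngtP a b) => [ab|ba|->]; [by left | by right; right|].
rewrite ?ltnn ?eqxx /=.
by case: (IH t) => [H|[->|H]]; [left | right; left | right; right].
Qed.

Section Main.
Variable d : nat.

Definition psum (x : pt d) : nat := \sum_(i < d) x i.

Lemma psum_add (x y : pt d) : psum (ptadd x y) = psum x + psum y.
Proof. by rewrite /psum /ptadd big_split. Qed.

Lemma psum_pos (u : pt d) : u <> pt0 -> 0 < psum u.
Proof.
move=> Hu.
have [i Hi] : exists i, u i != 0.
  apply: NNPP => H; apply: Hu; apply: functional_extensionality => i.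
  case: (eqVneq (u i) 0) => // Hi; exfalso; apply: H; by exists i.
rewrite /psum (bigD1 i) //=; by rewrite lt0n addn_eq0 negb_and Hi.
Qed.

Lemma ptle_trans (x y z : pt d) : ptle x y -> ptle y z -> ptle x z.
Proof. move=> H1 H2 i; exact: leq_trans (H1 i) (H2 i). Qed.

Lemma ptle_add (x u : pt d) : ptle x (ptadd x u).
Proof. move=> i; exact: leq_addr. Qed.

Variable S : pt d -> Prop.
Variable h : pt d.

Definition inA (x : pt d) : Prop := exists g, ~ S g /\ g <> h /\ ptle x g.

Definition rk (x : pt d) : nat :=
  if excluded_middle_informative (inA x) then 0 else 1.

Lemma rk_mono x y : ptle x y -> rk x <= rk y.
Proof.
rewrite /rk => Hxy.
case: excluded_middle_informative => // Hx.
case: excluded_middle_informative => // [[g [Hg [Hgh Hyg]]]].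
exfalso; apply: Hx; exists g; split => //; split => //; exact: ptle_trans Hxy Hyg.
Qed.

Definition key (x : pt d) : seq nat := rk x :: psum x :: map x (enum 'I_d).

Definition prec (x y : pt d) : Prop := lt_lex (key x) (key y).

Lemma key_inj x y : key x = key y -> x = y.
Proof.
case=> _ _ /eq_in_map H; apply: functional_extensionality => i.
by apply: H; rewrite mem_enum.
Qed.

Lemma key_step x y : ptle x y -> x <> y -> lt_lex (key x) (key y).
Proof.
move=> Hxy Hne.
set u : pt d := fun i => y i - x i.
have Hy : y = ptadd x u.
  apply: functional_extensionality => i; by rewrite /ptadd /u subnKC.
have Hu : u <> pt0.
  move=> Hu0; apply: Hne; rewrite Hy Hu0; apply: functional_extensionality => i.
  by rewrite /ptadd /pt0 addn0.
rewrite /key /=.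
have := rk_mono Hxy; rewrite leq_eqVlt => /orP[/eqP ->|->] //.
rewrite ltnn eqxx /= Hy psum_add -{1}(addn0 (psum x)) ltn_add2l (psum_pos Hu).
by [].
Qed.

Lemma prec_rmo : is_relaxed_monomial_order prec.
Proof.
split; [|split; [|split; [|split]]].
- move=> x; exact/negP/lex_irr.
- move=> x y z; exact: lex_trans.
- move=> x y; case: (lex_total (key x) (key y)) => [H|[H|H]].
  + by left.
  + by right; left; apply: key_inj.
  + by right; right.
- move=> v w u H; rewrite /prec.
  case: (classic (u = pt0)) => [->|Hu].
    have -> : ptadd w pt0 = w by apply: functional_extensionality => i; rewrite /ptadd /pt0 addn0.
    exact: H.
  apply: lex_trans H _; apply: key_step; first exact: ptle_add.
  move=> E; have := psum_pos Hu; rewrite -(ltn_add2l (psum w)) addn0 -psum_add -E ltnn.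
  by [].
- move=> v Hv; apply: key_step; first by move=> i.
  by move=> E; apply: Hv.
Qed.

End Main.

Theorem theorem2p1 (d : nat) (S : pt d -> Prop) (h : pt d) :
  is_GNS S -> is_gap S h ->
  (Frobenius_allowable S h <-> maximal_gap S h).
Proof.
move=> _ Hh; split.
- move=> [p [[Hirr [Htr [Htot [Hi Hii]]]] [_ HF]]]; split => // g Hg Hhg.
  apply: NNPP => Hne.
  set u : pt d := fun i => g i - h i.
  have Hgu : g = ptadd h u.
    apply: functional_extensionality => i; by rewrite /ptadd /u subnKC.
  have Hu : u <> pt0.
    move=> Hu0; apply: Hne; rewrite Hgu Hu0; apply: functional_extensionality => i.
    by rewrite /ptadd /pt0 addn0.
  have Hhg' : p h g.
    case: (Htot h g) => [//|[E|E]]; first by exfalso; apply: Hne.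
    exfalso; apply: (Hirr g); have := Hi g h u E; by rewrite -Hgu.
  case: (HF g Hg) => [E|E]; first by apply: Hne.
  by apply: (Hirr h); apply: Htr Hhg' E.
- move=> [_ Hmax]; exists (prec S h); split; first exact: prec_rmo.
  split => // g Hg.
  case: (classic (g = h)) => [->|Hgh]; [by left | right].
  have HgA : inA S h g by exists g; split => //; split => // i.
  have HhA : ~ inA S h h.
    move=> [g' [Hg' [Hg'h Hle]]]; apply: Hg'h; exact: Hmax.
  rewrite /prec /key /=.
  have -> : rk S h g = 0 by rewrite /rk; case: excluded_middle_informative.
  have -> : rk S h h = 1 by rewrite /rk; case: excluded_middle_informative.
  by [].
Qed.
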